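(* Let $\mathbf{V} \in \mathbb{R}^{n \times d}$ with rows $\mathbf{v}_1, \dots, \mathbf{v}_n \in \mathbb{R}^{d}$, and let $\mathbf{A} = \mathbf{V}\mathbf{V}^T$, so $A_{ij} = \mathbf{v}_i^T \mathbf{v}_j$. Consider the correlation clustering problem for $\mathbf{A}$: maximize $$\sum_{1 \le i<j \le n} A_{ij}\, \mathbf{x}_i^T \mathbf{x}_j$$ over all choices $\mathbf{x}_i \in \{\mathbf{e}_1, \dots, \mathbf{e}_n\}$ ($i=1,\dots,n$), where $\mathbf{e}_k$ is the $k$-th standard basis vector of $\mathbb{R}^n$ (equivalently, over all partitions of $\{1,\dots,n\}$ into clusters, where $\mathbf{x}_i$ indicates the cluster of $i$, maximize the sum of $A_{ij}$ over pairs $i<j$ in the same cluster). Then this problem can be solved by partitioning the row vectors $\mathbf{v}_1,\dots,\mathbf{v}_n$ into $d+1$ clusters $C_1, \dots, C_{d+1}$ (some possibly empty) so as to maximize $$\sum_{i=1}^{d+1} \|S_i\|_2^2, \qquad S_i = \sum_{\mathbf{v} \in C_i} \mathbf{v}.$$ That is, the maximum of this quantity over partitions into $d+1$ (possibly empty) clusters is attained, and any partition attaining it (with empty clusters discarded) is an optimal solution of the correlation clustering problem for $\mathbf{A}$.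
   Context: The vector $S_i$ is called the sum point of cluster $C_i$; the sum point of an empty cluster is the zero vector. Clusters are formed from the indices $1,\dots,n$ (equivalently, from the row vectors with multiplicity). *)

(* Defs.v *)
From mathcomp Require Import all_boot all_order all_algebra.
Set Implicit Arguments. Unset Strict Implicit. Unset Printing Implicit Defensive.
Import Order.TTheory GRing.Theory Num.Theory.
Local Open Scope ring_scope.

Definition gram (R : realFieldType) (n d : nat) (V : 'M[R]_(n, d)) : 'M[R]_n :=
  V *m V^T.

(* Correlation-clustering objective for a cluster assignment x : 'I_n -> T
   (x_i^T x_j = 1 iff i and j get the same basis vector / label, else 0):
   sum over i < j of A_ij [x i = x j]. *)
Definition cc_value (R : realFieldType) (n : nat) (A : 'M[R]_n)
    (T : eqType) (x : 'I_n -> T) : R :=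
  \sum_(i < n) \sum_(j < n | (i < j)%N) A i j * (x i == x j)%:R.

Definition sum_point (R : realFieldType) (n d k : nat) (V : 'M[R]_(n, d))
    (c : 'I_n -> 'I_k) (l : 'I_k) : 'rV[R]_d :=
  \sum_(i < n | c i == l) row i V.

Definition sqnorm (R : realFieldType) (d : nat) (s : 'rV[R]_d) : R :=
  \sum_(k < d) s 0 k ^+ 2.

Definition sumpoint_value (R : realFieldType) (n d : nat) (V : 'M[R]_(n, d))
    (c : 'I_n -> 'I_d.+1) : R :=
  \sum_(l < d.+1) sqnorm (sum_point V c l).

(* Main.v *)
Require Import Defs.
From mathcomp Require Import all_boot all_order all_algebra.
From mathcomp Require Import lra.
Import Order.TTheory GRing.Theory Num.Theory.
Local Open Scope ring_scope.
Set Implicit Arguments. Unset Strict Implicit. Unset Printing Implicit Defensive.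

Section Geo.
Variable R : realFieldType.
Variable d : nat.

Definition ip (u v : 'rV[R]_d) : R := (u *m v^T) 0 0.

Lemma ip_sym u v : ip u v = ip v u.
Proof. by rewrite /ip !mxE; apply: eq_bigr => k _; rewrite !mxE mulrC. Qed.

Lemma ip_suml (I : Type) (r : seq I) (P : pred I) (F : I -> 'rV[R]_d) v :
  ip (\sum_(t <- r | P t) F t) v = \sum_(t <- r | P t) ip (F t) v.
Proof. by rewrite /ip mulmx_suml summxE. Qed.

Lemma ip_sumr (I : Type) (r : seq I) (P : pred I) (F : I -> 'rV[R]_d) v :
  ip v (\sum_(t <- r | P t) F t) = \sum_(t <- r | P t) ip v (F t).
Proof. by rewrite ip_sym ip_suml; apply: eq_bigr => t _; rewrite ip_sym. Qed.

Lemma ip_scalel a u v : ip (a *: u) v = a * ip u v.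
Proof. by rewrite /ip -scalemxAl mxE. Qed.

Lemma ip_scaler a u v : ip u (a *: v) = a * ip u v.
Proof. by rewrite ip_sym ip_scalel ip_sym. Qed.

Lemma ip0l v : ip 0 v = 0.
Proof. by rewrite /ip mul0mx mxE. Qed.

Lemma ip_self u : ip u u = \sum_k u 0 k ^+ 2.
Proof. by rewrite /ip mxE; apply: eq_bigr => k _; rewrite mxE expr2. Qed.

Lemma ip_self_eq0 u : ip u u <= 0 -> u = 0.
Proof.
move=> H.
have H0 : ip u u = 0.
  by apply/eqP; rewrite eq_le H /= ip_self sumr_ge0 // => k _; rewrite sqr_ge0.
apply/rowP => k; rewrite mxE.
have := @psumr_eq0P _ _ predT (fun k => u 0 k ^+ 2) (fun k _ => sqr_ge0 _) _ k isT.
by move=> /(_ _) /eqP; rewrite sqrf_eq0 => /(_ _) /eqP; apply; rewrite -ip_self.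
Qed.

Lemma geo (w : 'I_d.+2 -> 'rV[R]_d) : exists a b, a != b /\ 0 <= ip (w a) (w b).
Proof.
case: (boolP [exists a, exists b, (a != b) && (0 <= ip (w a) (w b))]).
  by move=> /existsP [a /existsP [b /andP [Hab Hip]]]; exists a, b.
move=> Hn; exfalso.
have neg : forall a b, a != b -> ip (w a) (w b) < 0.
  move=> a b Hab; rewrite ltNge; apply/negP => Hle; move/negP: Hn; apply.
  by apply/existsP; exists a; apply/existsP; exists b; rewrite Hab Hle.
pose wd (t : 'I_d.+1) := w (widen_ord (leqnSn _) t).
pose M := \matrix_(t < d.+1) wd t.
have Hneq : forall t : 'I_d.+1, widen_ord (leqnSn _) t != ord_max.
  by move=> t; rewrite -val_eqE /= neq_ltn ltn_ord.
have HK : kermx M != 0.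
  rewrite kermx_eq0 /row_free; apply/negP => /eqP Hr.
  by have := rank_leq_col M; rewrite Hr ltnn.
case/matrix0Pn: HK => i [j Hij].
pose u0 := row i (kermx M).
have Hu0 : u0 *m M = 0 by rewrite /u0 -row_mul mulmx_ker row0.
have Hu0j : u0 0 j != 0 by rewrite /u0 mxE.
pose u := if 0 < u0 0 j then u0 else - u0.
have Hu : u *m M = 0 by rewrite /u; case: ifP => _; rewrite ?mulNmx Hu0 ?oppr0.
have Huj : 0 < u 0 j.
  rewrite /u; case: ifP => // H; by rewrite mxE oppr_gt0 lt_def eq_sym Hu0j /= leNgt H.
pose pos t := Num.max (u 0 t) 0.
pose ng t := Num.max (- u 0 t) 0.
have posge t : 0 <= pos t by rewrite /pos le_max lexx orbT.
have ngge t : 0 <= ng t by rewrite /ng le_max lexx orbT.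
have posng t : pos t * ng t = 0.
  rewrite /pos /ng; case: (leP 0 (u 0 t)) => H.
    by rewrite max_r ?mulr0 // oppr_le0.
  by rewrite mul0r.
have posu t : pos t - ng t = u 0 t.
  rewrite /pos /ng; case: (leP 0 (u 0 t)) => H.
    by rewrite max_r ?subr0 // oppr_le0.
  by rewrite max_l ?sub0r ?opprK // oppr_ge0 ltW.
pose P := \sum_t pos t *: wd t.
pose N := \sum_t ng t *: wd t.
have HPN : P = N.
  apply: subr0_eq; rewrite /P /N -sumrB; apply: (etrans _ Hu).
  rewrite mulmx_sum_row.
  by apply: eq_bigr => t _; rewrite -scalerBl posu rowK.
have HPP : ip P P <= 0.
  rewrite {2}HPN /P /N ip_suml sumr_le0 // => s _.
  rewrite ip_scalel ip_sumr mulr_sumr sumr_le0 // => t _.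
  rewrite ip_scaler; case: (eqVneq s t) => [->|Hst].
    by rewrite mulrA posng mul0r.
  rewrite mulrA mulr_ge0_le0 ?mulr_ge0 // ltW // neg //.
have P0 := @ip_self_eq0 _ HPP.
have : ip P (w ord_max) < 0.
  rewrite /P ip_suml (bigD1 j) //=.
  have Hj : pos j = u 0 j by rewrite /pos max_l // ltW.
  rewrite ip_scalel Hj.
  have h1 : u 0 j * ip (wd j) (w ord_max) < 0 by rewrite pmulr_rlt0 // neg ?Hneq.
  have h2 : \sum_(t < d.+1 | t != j) ip (pos t *: wd t) (w ord_max) <= 0.
    by apply: sumr_le0 => t _; rewrite ip_scalel mulr_ge0_le0 // ltW // neg ?Hneq.
  lra.
by rewrite P0 ip0l ltxx.
Qed.
End Geo.

Section Main.
Variable R : realFieldType.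
Variables n d : nat.
Variable V : 'M[R]_(n, d).

Let G := gram V.

Definition Q (T : eqType) (f : 'I_n -> T) : R :=
  \sum_i \sum_j G i j * (f i == f j)%:R.

Definition S (T : eqType) (f : 'I_n -> T) (l : T) : 'rV[R]_d :=
  \sum_(i < n | f i == l) row i V.

Lemma G_ip i j : G i j = ip (row i V) (row j V).
Proof. by rewrite /G /gram /ip !mxE; apply: eq_bigr => k _; rewrite !mxE. Qed.

Lemma G_sym i j : G i j = G j i.
Proof. by rewrite !G_ip ip_sym. Qed.

Lemma pairE (T : eqType) (f : 'I_n -> T) a b :
  \sum_i \sum_j G i j * ((f i == a)%:R * (f j == b)%:R) = ip (S f a) (S f b).
Proof.
rewrite /S ip_suml [RHS]big_mkcond /=; apply: eq_bigr => i _.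
case: (f i == a); last by rewrite big1 // => j _; rewrite mul0r mulr0.
rewrite ip_sumr [RHS]big_mkcond /=; apply: eq_bigr => j _.
by case: (f j == b); rewrite /= ?mul1r ?mulr0 ?mulr1 ?G_ip.
Qed.

Lemma Q_S (T : finType) (f : 'I_n -> T) : Q f = \sum_(l : T) ip (S f l) (S f l).
Proof.
transitivity (\sum_(l : T) \sum_i \sum_j G i j * ((f i == l)%:R * (f j == l)%:R));
  last by apply: eq_bigr => l _; rewrite pairE.
rewrite /Q [RHS]exchange_big; apply: eq_bigr => i _; rewrite [RHS]exchange_big.
apply: eq_bigr => j _; rewrite -[RHS]mulr_sumr (bigD1 (f i)) //= eqxx mul1r big1 ?addr0 1?eq_sym //.
by move=> l Hl; rewrite eq_sym (negbTE Hl) mul0r.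
Qed.

Lemma sumpoint_Q (c : 'I_n -> 'I_d.+1) : sumpoint_value V c = Q c.
Proof. by rewrite /sumpoint_value Q_S; apply: eq_bigr => l _; rewrite /sqnorm -ip_self. Qed.

Lemma Q_pattern (T1 T2 : eqType) (f : 'I_n -> T1) (g : 'I_n -> T2) :
  (forall i j, (f i == f j) = (g i == g j)) -> Q f = Q g.
Proof. by move=> H; apply: eq_bigr => i _; apply: eq_bigr => j _; rewrite H. Qed.

Lemma cc_Q (T : eqType) (f : 'I_n -> T) : 2 * cc_value G f = Q f - \sum_i G i i.
Proof.
pose t i j := G i j * (f i == f j)%:R.
have E1 : Q f = \sum_(i < n) \sum_(j < n) (if (i < j)%N then t i j else 0)
              + \sum_(i < n) \sum_(j < n) (if (j < i)%N then t i j else 0)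
              + \sum_(i < n) \sum_(j < n) (if (i == j :> nat) then t i j else 0).
  rewrite /Q -!big_split; apply: eq_bigr => i _; rewrite -!big_split.
  apply: eq_bigr => j _ /=; case: (ltngtP i j) => h.
  - by rewrite !addr0.
  - by rewrite add0r addr0.
  - by rewrite !add0r.
have E2 : \sum_(i < n) \sum_(j < n) (if (j < i)%N then t i j else 0)
          = \sum_(i < n) \sum_(j < n) (if (i < j)%N then t i j else 0).
  rewrite exchange_big; apply: eq_bigr => i _; apply: eq_bigr => j _.
  by rewrite /t G_sym eq_sym.
have E3 : \sum_(i < n) \sum_(j < n) (if (i == j :> nat) then t i j else 0) = \sum_i G i i.
  apply: eq_bigr => i _; rewrite (bigD1 i) //= eqxx big1 ?addr0.
    by rewrite /t eqxx mulr1.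
  by move=> j Hj; rewrite ifF //; apply/negbTE; rewrite eq_sym.
have E4 : cc_value G f = \sum_(i < n) \sum_(j < n) (if (i < j)%N then t i j else 0).
  by apply: eq_bigr => i _; rewrite big_mkcond.
rewrite E1 E2 E3 E4; lra.
Qed.

Lemma relabel (T : finType) k (y : 'I_n -> T) :
  (#|[set y i | i : 'I_n]| <= k)%N ->
  exists c : 'I_n -> 'I_k, forall i j, (c i == c j) = (y i == y j).
Proof.
set I := [set y i | i : 'I_n] => Hk.
have Hin i : y i \in enum I by rewrite mem_enum imset_f.
have Hlt i : (index (y i) (enum I) < k)%N.
  by apply: leq_trans Hk; rewrite cardE index_mem.
exists (fun i => Ordinal (Hlt i)) => i j.
rewrite -val_eqE /=; apply/eqP/eqP => [h|->] //.
by rewrite -(nth_index (y i) (Hin i)) -(nth_index (y i) (Hin j)) h.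
Qed.

Lemma reduce (y : 'I_n -> 'I_n) : exists c : 'I_n -> 'I_d.+1, Q y <= Q c.
Proof.
move: {2}#|[set y i | i : 'I_n]| (leqnn #|[set y i | i : 'I_n]|) => m.
elim: m y => [|m IH] y Hm; case: (leqP #|[set y i | i : 'I_n]| d.+1) => Hle.
- by have [c Hc] := relabel Hle; exists c; rewrite (Q_pattern Hc).
- by move: (leq_trans Hle Hm).
- by have [c Hc] := relabel Hle; exists c; rewrite (Q_pattern Hc).
set I := [set y i | i : 'I_n] in Hm Hle.
set s := enum I.
have Hs : size s = #|I| by rewrite cardE.
have [x0 _] : exists x, x \in I by apply/card_gt0P; apply: leq_trans Hle.
pose w (t : 'I_d.+2) := S y (nth x0 s t).
have [a [b [Hab Hip]]] := geo w.
set la := nth x0 s a; set lb := nth x0 s b.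
have Ha : (a < size s)%N by rewrite Hs; apply: leq_trans Hle; rewrite ltnS -ltnS.
have Hb : (b < size s)%N by rewrite Hs; apply: leq_trans Hle; rewrite ltnS -ltnS.
have Hlab : la != lb by rewrite /la /lb nth_uniq ?enum_uniq.
have laI : la \in I by rewrite -mem_enum mem_nth.
have lbI : lb \in I by rewrite -mem_enum mem_nth.
pose y' i := if y i == lb then la else y i.
have Hsub : [set y' i | i : 'I_n] \subset I :\ lb.
  apply/subsetP => z /imsetP [i _ ->]; rewrite /y' !inE.
  case: (eqVneq (y i) lb) => [_|H]; first by rewrite laI Hlab.
  by rewrite H imset_f.
have Hcard : (#|[set y' i | i : 'I_n]| <= m)%N.
  have := subset_leq_card Hsub; move: Hm; rewrite (cardsD1 lb I) lbI.
  by rewrite add1n ltnS => h1 h2; apply: leq_trans h2 h1.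
have [c Hc] := IH y' Hcard.
exists c; apply: le_trans Hc.
have E : forall i j, ((y' i == y' j)%:R : R) = (y i == y j)%:R
     + (y i == la)%:R * (y j == lb)%:R + (y i == lb)%:R * (y j == la)%:R.
  move=> i j; rewrite /y'.
  have Hlba : lb != la by rewrite eq_sym.
  case: (eqVneq (y i) lb) => [->|Hi]; case: (eqVneq (y j) lb) => [->|Hj];
    rewrite ?eqxx ?(negbTE Hlab) ?(negbTE Hlba) ?(negbTE Hi) ?(negbTE Hj) /=.
  all: rewrite ?mul0r ?mulr0 ?mul1r ?mulr1 ?addr0 ?add0r //. by rewrite (@eq_sym _ la).
have EQ : Q y' = Q y + ip (S y la) (S y lb) + ip (S y lb) (S y la).
  rewrite /Q -!pairE -!big_split; apply: eq_bigr => i _; rewrite -!big_split.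
  by apply: eq_bigr => j _; rewrite E !mulrDr.
rewrite EQ (ip_sym (S y lb)); move: Hip; rewrite /w -/la -/lb => Hip; lra.
Qed.

End Main.

Theorem theorem1 (R : realFieldType) (n d : nat) (V : 'M[R]_(n, d)) :
  (exists c : 'I_n -> 'I_d.+1,
      forall c' : 'I_n -> 'I_d.+1, sumpoint_value V c' <= sumpoint_value V c)
  /\
  (forall c : 'I_n -> 'I_d.+1,
      (forall c' : 'I_n -> 'I_d.+1, sumpoint_value V c' <= sumpoint_value V c) ->
      exists x : 'I_n -> 'I_n,
        (forall i j : 'I_n, (x i == x j) = (c i == c j)) /\
        (forall y : 'I_n -> 'I_n, cc_value (gram V) y <= cc_value (gram V) x)).
Proof.
split.
  pose F (f : {ffun 'I_n -> 'I_d.+1}) := sumpoint_value V f.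
  have i0 : {ffun 'I_n -> 'I_d.+1} := [ffun => ord0].
  case: (@arg_maxP _ _ _ i0 predT F isT) => f _ Hf.
  exists f => c'; have := Hf [ffun i => c' i] isT.
  rewrite /F !sumpoint_Q => h; apply: le_trans h; rewrite le_eqVlt; apply/orP; left.
  by apply/eqP/Q_pattern => i j; rewrite !ffunE.
move=> c Hc.
have [x Hx] := relabel (k:=n) (y:=c) (leq_trans (leq_imset_card _ _) (eq_leq (card_ord n))).
exists x; split => // y.
have [c' Hc'] := reduce V y.
have h1 := cc_Q V y; have h2 := cc_Q V x.
have h3 : Q V x = Q V c by apply: Q_pattern.
have h4 := Hc c'; rewrite !sumpoint_Q in h4.
lra.
Qed.
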